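(* Let $X$ be a gamble and $\varepsilon>0$. Let $\underline{P}$ be a coherent lower prevision on a set of gambles as specified below, with conjugate $\overline{P}$, let $\underline{Q}$ be any coherent lower prevision on the linear space of all gambles extending $\underline{P}$, and let $\underline{V}(X)=\min_{c\in\mathbb{R}}\underline{Q}((X-c)^2)$ and $\overline{V}(X)=\min_{c\in\mathbb{R}}\overline{Q}((X-c)^2)$ be the lower and upper variances of $X$. (a) If $\underline{P}$ is coherent on $\{X,-X,I_{(X\le\underline{P}(X)-\varepsilon)},I_{(X\le\overline{P}(X)-\varepsilon)}\}$, then $$\underline{P}(X\le\overline{P}(X)-\varepsilon)\le\frac{\overline{V}(X)}{\overline{V}(X)+\varepsilon^2},\qquad \underline{P}(X\le\underline{P}(X)-\varepsilon)\le\frac{\underline{V}(X)}{\underline{V}(X)+\varepsilon^2}.$$ (b) If $\underline{P}$ is coherent on $\{X,-X,I_{(X\ge\underline{P}(X)+\varepsilon)},I_{(X\ge\overline{P}(X)+\varepsilon)}\}$, then $$\underline{P}(X\ge\underline{P}(X)+\varepsilon)\le\frac{\overline{V}(X)}{\overline{V}(X)+\varepsilon^2},\qquad \underline{P}(X\ge\overline{P}(X)+\varepsilon)\le\frac{\underline{V}(X)}{\underline{V}(X)+\varepsilon^2}.$$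
   Context: $\Pi$ is a partition of the sure event into pairwise disjoint non-impossible events; a gamble is a bounded map $X:\Pi\to\mathbb{R}$; $(X\le a)$, $(X\ge a)$ are events with indicators, and $\underline{P}(X\le a)=\underline{P}(I_{(X\le a)})$. A map $P:\mathcal{D}\to\mathbb{R}$ is a dF-coherent prevision iff for all $n\in\mathbb{N}$, $s_0,\dots,s_n\in\mathbb{R}$, $X_0,\dots,X_n\in\mathcal{D}$, $\sup\sum_{i=0}^n s_i(X_i-P(X_i))\ge 0$. A lower prevision $\underline{P}:\mathcal{D}\to\mathbb{R}$ is coherent iff there is a nonempty set of dF-coherent previsions on $\mathcal{D}$ whose pointwise infimum is $\underline{P}$; every coherent lower prevision on $\mathcal{D}$ has a coherent extension to all gambles. Conjugates: $\overline{P}(Y)=-\underline{P}(-Y)$, $\overline{Q}(Y)=-\underline{Q}(-Y)$. The minima defining $\underline{V}(X),\overline{V}(X)$ are attained (Walley). *)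

(* Defs.v *)
From Stdlib Require Import Reals Lra.
Open Scope R_scope.

(* Atoms of the partition Pi are the elements of a type Om; a gamble is a
   (bounded_gamble) map Om -> R.  Sets of gambles are predicates. *)
Definition bounded_gamble {Om : Type} (X : Om -> R) : Prop :=
  exists M, forall w, Rabs (X w) <= M.

(* sup_w f w >= 0, written out (f is bounded_gamble in all uses). *)
Definition sup_ge0 {Om : Type} (f : Om -> R) : Prop :=
  forall d, 0 < d -> exists w, - d < f w.

Definition dF_coherent {Om : Type} (D : (Om -> R) -> Prop)
  (P : (Om -> R) -> R) : Prop :=
  forall (n : nat) (s : nat -> R) (Xs : nat -> Om -> R),
    (forall i, (i <= n)%nat -> D (Xs i)) ->
    sup_ge0 (fun w => sum_f_R0 (fun i => s i * (Xs i w - P (Xs i))) n).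

Definition is_inf_on {Om : Type} (M : ((Om -> R) -> R) -> Prop)
  (P : (Om -> R) -> R) (X : Om -> R) : Prop :=
  (forall P', M P' -> P X <= P' X) /\
  (forall d, 0 < d -> exists P', M P' /\ P' X < P X + d).

Definition coherent_lower {Om : Type} (D : (Om -> R) -> Prop)
  (P : (Om -> R) -> R) : Prop :=
  exists M : ((Om -> R) -> R) -> Prop,
    (exists P0, M P0) /\
    (forall P', M P' -> dF_coherent D P') /\
    (forall X, D X -> is_inf_on M P X).

Definition upper {Om : Type} (P : (Om -> R) -> R) (Y : Om -> R) : R :=
  - P (fun w => - Y w).

Definition ind_le {Om : Type} (X : Om -> R) (a : R) : Om -> R :=
  fun w => if Rle_dec (X w) a then 1 else 0.
Definition ind_ge {Om : Type} (X : Om -> R) (a : R) : Om -> R :=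
  fun w => if Rle_dec a (X w) then 1 else 0.

Definition sqdev {Om : Type} (X : Om -> R) (c : R) : Om -> R :=
  fun w => (X w - c) ^ 2.

Definition is_min_over (f : R -> R) (v : R) : Prop :=
  (exists c, f c = v) /\ (forall c, v <= f c).

Definition dom_a {Om : Type} (P : (Om -> R) -> R) (X : Om -> R) (eps : R)
  (Y : Om -> R) : Prop :=
  Y = X \/ Y = (fun w => - X w) \/
  Y = ind_le X (P X - eps) \/ Y = ind_le X (upper P X - eps).
Definition dom_b {Om : Type} (P : (Om -> R) -> R) (X : Om -> R) (eps : R)
  (Y : Om -> R) : Prop :=
  Y = X \/ Y = (fun w => - X w) \/
  Y = ind_ge X (P X + eps) \/ Y = ind_ge X (upper P X + eps).

(* Main.v *)
Require Import Defs.
From Stdlib Require Import Reals Lra.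
Open Scope R_scope.

Lemma abs_bounds (x M : R) : Rabs x <= M -> - M <= x <= M.
Proof.
  intros H. pose proof (Rle_abs x). pose proof (Rle_abs (-x)).
  rewrite Rabs_Ropp in H1. lra.
Qed.

Lemma bnd_of {Om : Type} (f : Om -> R) (B : R) :
  (forall w, - B <= f w <= B) -> bounded_gamble f.
Proof. intros H. exists B. intros w. apply Rabs_le. apply H. Qed.

Section Lin.
Context {Om : Type} (R0 : (Om -> R) -> R) (HR : dF_coherent bounded_gamble R0).

Lemma lin_le (f g h : Om -> R) (a b k : R) :
  bounded_gamble f -> bounded_gamble g -> bounded_gamble h ->
  (forall w, h w <= a * f w + b * g w + k) ->
  R0 h <= a * R0 f + b * R0 g + k.
Proof.
  intros Hf Hg Hh Hp.
  pose (s := fun i : nat => match i with 0%nat => 1 | 1%nat => - a | _ => - b end).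
  pose (Xs := fun i : nat => match i with 0%nat => h | 1%nat => f | _ => g end).
  assert (HD : forall i, (i <= 2)%nat -> bounded_gamble (Xs i)).
  { intros i _. destruct i as [|[|]]; simpl; assumption. }
  pose proof (HR 2%nat s Xs HD) as Hs.
  apply Rnot_lt_le; intros Hlt.
  destruct (Hs (R0 h - (a * R0 f + b * R0 g + k))) as [w Hw]; [lra|].
  simpl in Hw. specialize (Hp w).
  assert (E : 1 * (h w - R0 h) + - a * (f w - R0 f) + - b * (g w - R0 g)
     = h w - a * f w - b * g w - R0 h + a * R0 f + b * R0 g) by ring.
  rewrite E in Hw. lra.
Qed.

Lemma lin_ge (f g h : Om -> R) (a b k : R) :
  bounded_gamble f -> bounded_gamble g -> bounded_gamble h ->
  (forall w, a * f w + b * g w + k <= h w) ->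
  a * R0 f + b * R0 g + k <= R0 h.
Proof.
  intros Hf Hg Hh Hp.
  pose (s := fun i : nat => match i with 0%nat => -1 | 1%nat => a | _ => b end).
  pose (Xs := fun i : nat => match i with 0%nat => h | 1%nat => f | _ => g end).
  assert (HD : forall i, (i <= 2)%nat -> bounded_gamble (Xs i)).
  { intros i _. destruct i as [|[|]]; simpl; assumption. }
  pose proof (HR 2%nat s Xs HD) as Hs.
  apply Rnot_lt_le; intros Hlt.
  destruct (Hs (a * R0 f + b * R0 g + k - R0 h)) as [w Hw]; [lra|].
  simpl in Hw. specialize (Hp w).
  assert (E : -1 * (h w - R0 h) + a * (f w - R0 f) + b * (g w - R0 g)
     = - h w + a * f w + b * g w + R0 h - a * R0 f - b * R0 g) by ring.
  rewrite E in Hw. lra.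
Qed.
End Lin.

Section RX.
Context {Om : Type} (X : Om -> R) (hX : bounded_gamble X)
  (R0 : (Om -> R) -> R) (HR : dF_coherent bounded_gamble R0).

Definition sq : Om -> R := fun w => X w ^ 2.

Lemma bnd_sq : bounded_gamble sq.
Proof.
  destruct hX as [M HM]. apply (bnd_of _ (M ^ 2)). intros w.
  pose proof (abs_bounds _ _ (HM w)). unfold sq. split; nra.
Qed.

Lemma bnd_sqdev c : bounded_gamble (sqdev X c).
Proof.
  destruct hX as [M HM]. apply (bnd_of _ ((M + Rabs c) ^ 2)). intros w.
  pose proof (abs_bounds _ _ (HM w)). pose proof (abs_bounds _ _ (Rle_refl (Rabs c))).
  pose proof (Rabs_pos c).
  unfold sqdev. split; nra.
Qed.

Lemma bnd_neg (Y : Om -> R) : bounded_gamble Y -> bounded_gamble (fun w => - Y w).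
Proof.
  intros [M HM]. exists M. intros w. rewrite Rabs_Ropp. apply HM.
Qed.

Lemma bnd_indle a : bounded_gamble (ind_le X a).
Proof. apply (bnd_of _ 1). intros w. unfold ind_le. destruct Rle_dec; lra. Qed.
Lemma bnd_indge a : bounded_gamble (ind_ge X a).
Proof. apply (bnd_of _ 1). intros w. unfold ind_ge. destruct Rle_dec; lra. Qed.

Lemma R_sqdev c : R0 (sqdev X c) = R0 sq - 2 * c * R0 X + c ^ 2.
Proof.
  apply Rle_antisym.
  - replace (R0 sq - 2 * c * R0 X + c ^ 2) with (1 * R0 sq + (- 2 * c) * R0 X + c ^ 2) by ring.
    apply lin_le; auto using bnd_sq, bnd_sqdev.
    intros w; unfold sqdev, sq; right; ring.
  - replace (R0 sq - 2 * c * R0 X + c ^ 2) with (1 * R0 sq + (- 2 * c) * R0 X + c ^ 2) by ring.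
    apply lin_ge; auto using bnd_sq, bnd_sqdev.
    intros w; unfold sqdev, sq; right; ring.
Qed.

Lemma R_neg (Y : Om -> R) : bounded_gamble Y -> R0 (fun w => - Y w) = - R0 Y.
Proof.
  intros HY. apply Rle_antisym.
  - replace (- R0 Y) with (-1 * R0 Y + 0 * R0 Y + 0) by ring.
    apply lin_le; auto using bnd_neg. intros w; right; ring.
  - replace (- R0 Y) with (-1 * R0 Y + 0 * R0 Y + 0) by ring.
    apply lin_ge; auto using bnd_neg. intros w; right; ring.
Qed.

Lemma R_sqdev_ge0 c : 0 <= R0 (sqdev X c).
Proof.
  replace 0 with (0 * R0 X + 0 * R0 X + 0) by ring.
  apply lin_ge; auto using bnd_sqdev. intros w; unfold sqdev.
  pose proof (pow2_ge_0 (X w - c)). lra.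
Qed.

Lemma R_indle a b t : 0 < t -> t <= b - a ->
  R0 (ind_le X a) <= (R0 sq - 2 * b * R0 X + b ^ 2) / t ^ 2.
Proof.
  intros Ht Hab.
  assert (Ht2 : 0 < t ^ 2) by nra.
  replace ((R0 sq - 2 * b * R0 X + b ^ 2) / t ^ 2) with
    ((1 / t ^ 2) * R0 sq + (- 2 * b / t ^ 2) * R0 X + b ^ 2 / t ^ 2) by (field; lra).
  apply lin_le; auto using bnd_sq, bnd_indle.
  intros w. unfold ind_le, sq.
  replace (1 / t ^ 2 * X w ^ 2 + - 2 * b / t ^ 2 * X w + b ^ 2 / t ^ 2)
    with ((X w - b) ^ 2 / t ^ 2) by (field; lra).
  assert (Hz : (X w - b) ^ 2 / t ^ 2 * t ^ 2 = (X w - b) ^ 2) by (field; lra).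
  destruct Rle_dec as [Hle|Hle].
  - assert (t ^ 2 <= (X w - b) ^ 2) by nra. nra.
  - pose proof (pow2_ge_0 (X w - b)). nra.
Qed.

Lemma R_indge a b t : 0 < t -> t <= a - b ->
  R0 (ind_ge X a) <= (R0 sq - 2 * b * R0 X + b ^ 2) / t ^ 2.
Proof.
  intros Ht Hab.
  assert (Ht2 : 0 < t ^ 2) by nra.
  replace ((R0 sq - 2 * b * R0 X + b ^ 2) / t ^ 2) with
    ((1 / t ^ 2) * R0 sq + (- 2 * b / t ^ 2) * R0 X + b ^ 2 / t ^ 2) by (field; lra).
  apply lin_le; auto using bnd_sq, bnd_indge.
  intros w. unfold ind_ge, sq.
  replace (1 / t ^ 2 * X w ^ 2 + - 2 * b / t ^ 2 * X w + b ^ 2 / t ^ 2)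
    with ((X w - b) ^ 2 / t ^ 2) by (field; lra).
  assert (Hz : (X w - b) ^ 2 / t ^ 2 * t ^ 2 = (X w - b) ^ 2) by (field; lra).
  destruct Rle_dec as [Hle|Hle].
  - assert (t ^ 2 <= (X w - b) ^ 2) by nra. nra.
  - pose proof (pow2_ge_0 (X w - b)). nra.
Qed.
End RX.

Lemma alg_step S m c b V W :
  S - 2 * c * m + c ^ 2 <= V -> (b - m) ^ 2 <= W -> S - 2 * b * m + b ^ 2 <= V + W.
Proof. intros H1 H2. pose proof (pow2_ge_0 (c - m)). nra. Qed.

Lemma sq_bound u x d : 0 <= u -> 0 < d -> u <= x -> x < u + Rmin 1 (d / (2 * u + 1)) ->
  x ^ 2 <= u ^ 2 + d.
Proof.
  intros Hu Hd H1 H2.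
  pose proof (Rmin_l 1 (d / (2 * u + 1))). pose proof (Rmin_r 1 (d / (2 * u + 1))).
  set (e := x - u).
  assert (He1 : e < 1) by (unfold e; lra).
  assert (He2 : e * (2 * u + 1) < d).
  { assert (e < d / (2 * u + 1)) by (unfold e; lra).
    apply (Rmult_lt_compat_r (2 * u + 1)) in H3; [|lra].
    unfold Rdiv in H3. rewrite Rmult_assoc, Rinv_l in H3; lra. }
  assert (0 <= e) by (unfold e; lra).
  replace x with (u + e) by (unfold e; ring). nra.
Qed.

Lemma core qI vv eps : 0 <= vv -> 0 < eps ->
  (forall d, 0 < d -> qI <= (vv + (vv / eps) ^ 2 + d) / (eps + vv / eps) ^ 2) ->
  qI <= vv / (vv + eps ^ 2).
Proof.
  intros Hv He H.
  set (u := vv / eps) in *.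
  assert (Hu : 0 <= u) by (unfold u; apply Rmult_le_pos; [lra| left; apply Rinv_0_lt_compat; lra]).
  assert (Ht : 0 < (eps + u) ^ 2) by nra.
  assert (K : (vv + u ^ 2) / (eps + u) ^ 2 = vv / (vv + eps ^ 2)).
  { unfold u. field. split; [|lra]. nra. }
  rewrite <- K. apply Rnot_lt_le. intros Hlt.
  set (d := (qI - (vv + u ^ 2) / (eps + u) ^ 2) * (eps + u) ^ 2 / 2).
  assert (Hd : 0 < d).
  { unfold d. apply Rmult_lt_0_compat; [|lra]. apply Rmult_lt_0_compat; lra. }
  specialize (H d Hd).
  assert (E : (vv + u ^ 2 + d) / (eps + u) ^ 2 = (vv + u ^ 2) / (eps + u) ^ 2 + (qI - (vv + u ^ 2) / (eps + u) ^ 2) / 2).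
  { unfold d. field. lra. }
  rewrite E in H. lra.
Qed.

Lemma u_nonneg v eps : 0 <= v -> 0 < eps -> 0 <= v / eps.
Proof. intros. apply Rmult_le_pos; [lra| left; apply Rinv_0_lt_compat; lra]. Qed.

Lemma dpos u d : 0 <= u -> 0 < d -> 0 < Rmin 1 (d / (2 * u + 1)).
Proof. intros. apply Rmin_pos; [lra|]. apply Rdiv_lt_0_compat; lra. Qed.

Lemma div_mono a b t : 0 < t -> a <= b -> a / t ^ 2 <= b / t ^ 2.
Proof. intros. unfold Rdiv. apply Rmult_le_compat_r; [|lra]. left; apply Rinv_0_lt_compat; nra. Qed.

Theorem proposition5 (Om : Type) (inh : inhabited Om) (X : Om -> R)
  (hX : bounded_gamble X) (eps : R) (heps : 0 < eps) :
  (forall P : (Om -> R) -> R, coherent_lower (dom_a P X eps) P ->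
   forall Q : (Om -> R) -> R, coherent_lower bounded_gamble Q ->
   (forall Y, dom_a P X eps Y -> Q Y = P Y) ->
   forall vl vu : R,
   is_min_over (fun c => Q (sqdev X c)) vl ->
   is_min_over (fun c => upper Q (sqdev X c)) vu ->
   P (ind_le X (upper P X - eps)) <= vu / (vu + eps ^ 2) /\
   P (ind_le X (P X - eps)) <= vl / (vl + eps ^ 2)) /\
  (forall P : (Om -> R) -> R, coherent_lower (dom_b P X eps) P ->
   forall Q : (Om -> R) -> R, coherent_lower bounded_gamble Q ->
   (forall Y, dom_b P X eps Y -> Q Y = P Y) ->
   forall vl vu : R,
   is_min_over (fun c => Q (sqdev X c)) vl ->
   is_min_over (fun c => upper Q (sqdev X c)) vu ->
   P (ind_ge X (P X + eps)) <= vu / (vu + eps ^ 2) /\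
   P (ind_ge X (upper P X + eps)) <= vl / (vl + eps ^ 2)).
Proof.
  assert (hnX := bnd_neg X hX).
  assert (GEN : forall Q : (Om -> R) -> R, coherent_lower bounded_gamble Q ->
   forall vl vu : R,
   is_min_over (fun c => Q (sqdev X c)) vl ->
   is_min_over (fun c => upper Q (sqdev X c)) vu ->
   let mb := - Q (fun w => - X w) in
   let mu := Q X in
   (Q (ind_le X (mb - eps)) <= vu / (vu + eps ^ 2) /\
    Q (ind_le X (mu - eps)) <= vl / (vl + eps ^ 2)) /\
   (Q (ind_ge X (mu + eps)) <= vu / (vu + eps ^ 2) /\
    Q (ind_ge X (mb + eps)) <= vl / (vl + eps ^ 2))).
  { intros Q [M [[R0 HR0] [HdF Hinf]]] vl vu Hvl Hvu mb mu.
    destruct Hvu as [[c0 Hc0] _]; destruct Hvl as [[c1 Hc1] _].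
    cbv beta in Hc0, Hc1. unfold upper in Hc0.
    assert (Hvu0 : 0 <= vu).
    { destruct (Hinf _ (bnd_neg _ (bnd_sqdev X hX c0))) as [Hl _].
      specialize (Hl R0 HR0). rewrite (R_neg _ (HdF R0 HR0)) in Hl by apply bnd_sqdev, hX.
      pose proof (R_sqdev_ge0 X hX R0 (HdF R0 HR0) c0). lra. }
    assert (Hvl0 : 0 <= vl).
    { apply Rnot_lt_le; intros Hlt.
      destruct (proj2 (Hinf _ (bnd_sqdev X hX c1)) (- vl)) as [R1 [HR1 Hlt1]]; [lra|].
      pose proof (R_sqdev_ge0 X hX R1 (HdF R1 HR1) c1). lra. }
    assert (Hupper : forall d, 0 < d -> exists R1, M R1 /\ dF_coherent bounded_gamble R1
              /\ mb - d < R1 X <= mb).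
    { intros d Hd. destruct (proj2 (Hinf _ hnX) d Hd) as [R1 [HR1 Hlt1]].
      exists R1. pose proof (HdF R1 HR1) as HR1d.
      pose proof (proj1 (Hinf _ hnX) R1 HR1).
      rewrite (R_neg _ HR1d _ hX) in *. unfold mb. repeat split; auto; lra. }
    assert (Hlower : forall d, 0 < d -> exists R1, M R1 /\ dF_coherent bounded_gamble R1
              /\ mu <= R1 X < mu + d).
    { intros d Hd. destruct (proj2 (Hinf _ hX) d Hd) as [R1 [HR1 Hlt1]].
      exists R1. pose proof (HdF R1 HR1) as HR1d.
      pose proof (proj1 (Hinf _ hX) R1 HR1). unfold mu. repeat split; auto; lra. }
    assert (Hvar : forall d, 0 < d -> exists R1, M R1 /\ dF_coherent bounded_gamble R1
              /\ mu <= R1 X <= mb /\ R1 (sq X) - 2 * c1 * R1 X + c1 ^ 2 < vl + d).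
    { intros d Hd. destruct (proj2 (Hinf _ (bnd_sqdev X hX c1)) d Hd) as [R1 [HR1 Hlt1]].
      exists R1. pose proof (HdF R1 HR1) as HR1d.
      pose proof (proj1 (Hinf _ hX) R1 HR1).
      pose proof (proj1 (Hinf _ hnX) R1 HR1).
      rewrite (R_neg _ HR1d _ hX) in *. rewrite (R_sqdev X hX _ HR1d) in Hlt1.
      unfold mb, mu. repeat split; auto; lra. }
    assert (Hvu1 : forall R1, M R1 -> R1 (sq X) - 2 * c0 * R1 X + c0 ^ 2 <= vu).
    { intros R1 HR1. pose proof (HdF R1 HR1) as HR1d.
      pose proof (proj1 (Hinf _ (bnd_neg _ (bnd_sqdev X hX c0))) R1 HR1) as H.
      rewrite (R_neg _ HR1d) in H by apply bnd_sqdev, hX.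
      rewrite (R_sqdev X hX _ HR1d) in H. lra. }
    split; split; apply core; auto; intros d Hd; set (u := _ / eps);
      assert (Hu : 0 <= u) by (apply u_nonneg; auto);
      assert (Ht : 0 < eps + u) by lra.
    - destruct (Hupper _ (dpos u d Hu Hd)) as [R1 [HR1 [HR1d HX1]]].
      pose proof (proj1 (Hinf _ (bnd_indle X (mb - eps))) R1 HR1).
      pose proof (R_indle X hX R1 HR1d (mb - eps) (mb + u) (eps + u) Ht ltac:(lra)).
      assert ((mb + u - R1 X) ^ 2 <= u ^ 2 + d) by (apply sq_bound; auto; lra).
      pose proof (alg_step _ _ _ _ _ _ (Hvu1 R1 HR1) H1).
      pose proof (div_mono _ _ _ Ht H2). lra.
    - destruct (Hvar _ Hd) as [R1 [HR1 [HR1d [HX1 HV1]]]].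
      pose proof (proj1 (Hinf _ (bnd_indle X (mu - eps))) R1 HR1).
      pose proof (R_indle X hX R1 HR1d (mu - eps) (R1 X + u) (eps + u) Ht ltac:(lra)).
      assert ((R1 X + u - R1 X) ^ 2 <= u ^ 2) by (right; ring).
      pose proof (alg_step _ _ _ _ _ _ (Rlt_le _ _ HV1) H1).
      pose proof (div_mono _ _ _ Ht H2). lra.
    - destruct (Hlower _ (dpos u d Hu Hd)) as [R1 [HR1 [HR1d HX1]]].
      pose proof (proj1 (Hinf _ (bnd_indge X (mu + eps))) R1 HR1).
      pose proof (R_indge X hX R1 HR1d (mu + eps) (mu - u) (eps + u) Ht ltac:(lra)).
      assert ((mu - u - R1 X) ^ 2 <= u ^ 2 + d).
      { replace ((mu - u - R1 X) ^ 2) with ((R1 X - (mu - u)) ^ 2) by ring.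
        apply sq_bound; auto; lra. }
      pose proof (alg_step _ _ _ _ _ _ (Hvu1 R1 HR1) H1).
      pose proof (div_mono _ _ _ Ht H2). lra.
    - destruct (Hvar _ Hd) as [R1 [HR1 [HR1d [HX1 HV1]]]].
      pose proof (proj1 (Hinf _ (bnd_indge X (mb + eps))) R1 HR1).
      pose proof (R_indge X hX R1 HR1d (mb + eps) (R1 X - u) (eps + u) Ht ltac:(lra)).
      assert ((R1 X - u - R1 X) ^ 2 <= u ^ 2) by (right; ring).
      pose proof (alg_step _ _ _ _ _ _ (Rlt_le _ _ HV1) H1).
      pose proof (div_mono _ _ _ Ht H2). lra. }
  split.
  - intros P _ Q HQ HQP vl vu Hvl Hvu.
    destruct (GEN Q HQ vl vu Hvl Hvu) as [[G1 G2] _].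
    assert (EX : P X = Q X) by (symmetry; apply HQP; left; reflexivity).
    assert (EnX : P (fun w => - X w) = Q (fun w => - X w))
      by (symmetry; apply HQP; right; left; reflexivity).
    rewrite <- (HQP (ind_le X (upper P X - eps))) by (right; right; right; reflexivity).
    rewrite <- (HQP (ind_le X (P X - eps))) by (right; right; left; reflexivity).
    unfold upper. rewrite EnX, EX. split; assumption.
  - intros P _ Q HQ HQP vl vu Hvl Hvu.
    destruct (GEN Q HQ vl vu Hvl Hvu) as [_ [G1 G2]].
    assert (EX : P X = Q X) by (symmetry; apply HQP; left; reflexivity).
    assert (EnX : P (fun w => - X w) = Q (fun w => - X w))
      by (symmetry; apply HQP; right; left; reflexivity).
    rewrite <- (HQP (ind_ge X (P X + eps))) by (right; right; left; reflexivity).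
    rewrite <- (HQP (ind_ge X (upper P X + eps))) by (right; right; right; reflexivity).
    unfold upper. rewrite EnX, EX. split; assumption.
Qed.
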